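(* Let $R$ be a commutative ring. Let $0\to P\xrightarrow{f}F\xrightarrow{g}M\to 0$ be a $w$-split exact sequence of $R$-modules, with fixed $J=\langle d_1,\dots,d_n\rangle\in\mathrm{GV}(R)$ and $h_1,\dots,h_n\in\mathrm{Hom}_R(M,F)$ satisfying $gh_k=\eta^M_{d_k}$. Suppose $F=\bigoplus_{i\in I}F_i$ with each $F_i$ a projective submodule. Let $\mathcal S_1$ be a set of subsets of $I$, totally ordered by inclusion, such that $h_k(M(H_s))\subseteq F(H_s)$ for every $H_s\in\mathcal S_1$ and every $k=1,\dots,n$. Put $H=\bigcup_{H_s\in\mathcal S_1}H_s$. Then: (1) $\bigcup_{H_s\in\mathcal S_1}F(H_s)=F(H)$, which is therefore projective. Moreover, $\bigcup_{H_s\in\mathcal S_1}P(H_s)=P(H)$ and $\bigcup_{H_s\in\mathcal S_1}M(H_s)=M(H)$. (2) $h_k(M(H))\subseteq F(H)$ for all $k=1,\dots,n$. Hence the exact sequence $0\to P(H)\xrightarrow{f|_{P(H)}}F(H)\xrightarrow{g|_{F(H)}}M(H)\to 0$ is $w$-split (witnessed by $J$ and the restrictions of the $h_k$).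
   Context: $R$ is a commutative ring with identity. For an $R$-module $X$ and $s\in R$, $\eta^X_s$ is multiplication by $s$. An ideal $J$ is a GV-ideal if $J$ is finitely generated and the natural map $R\to\mathrm{Hom}_R(J,R)$ is an isomorphism; $\mathrm{GV}(R)$ is the set of GV-ideals. A short exact sequence $0\to A\xrightarrow{f}B\xrightarrow{g}C\to 0$ is $w$-split if there exist $J=\langle d_1,\dots,d_n\rangle\in\mathrm{GV}(R)$ and $h_k\in\mathrm{Hom}_R(C,B)$ with $gh_k=\eta^C_{d_k}$ for all $k$. Notation: for $H\subseteq I$ nonempty, $F(H)=\bigoplus_{j\in H}F_j$, $M(H)=g(F(H))$ and $P(H)=f^{-1}(\ker(g|_{F(H)}))$. For $H=\emptyset$, $F(H)=P(H)=M(H)=0$. *)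

(* Defs.v *)
From HB Require Import structures.
From mathcomp Require Import all_boot all_order all_algebra.
Set Implicit Arguments. Unset Strict Implicit. Unset Printing Implicit Defensive.
Import GRing.Theory.
Local Open Scope ring_scope.

Section Defs.
Variable R : comPzRingType.

(* Submodules of an R-module V are represented by predicates S : V -> Prop. *)
Definition submodP (V : lmodType R) (S : V -> Prop) : Prop :=
  S 0 /\ (forall x y, S x -> S y -> S (x + y)) /\ (forall a x, S x -> S (a *: x)).

Definition linear_on (V W : lmodType R) (S : V -> Prop) (u : V -> W) : Prop :=
  forall a x y, S x -> S y -> u (a *: x + y) = a *: u x + u y.

Definition projective_sub (V : lmodType R) (S : V -> Prop) : Prop :=
  submodP S /\
  forall (A B : lmodType R) (p : {linear A -> B}) (u : V -> B),
    (forall b, exists a, p a = b) ->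
    linear_on S u ->
    exists v : V -> A, linear_on S v /\ forall x, S x -> p (v x) = u x.

Definition ideal_gen (n : nat) (d : 'I_n -> R) (x : R) : Prop :=
  exists r : 'I_n -> R, x = \sum_(i < n) r i * d i.

(* J = <d_1,...,d_n> is a GV-ideal: J is finitely generated (by construction)
   and the natural map R -> Hom_R(J,R), r |-> (x |-> r x), is bijective. *)
Definition GV_ideal (n : nat) (d : 'I_n -> R) : Prop :=
  (forall r : R, (forall x, ideal_gen d x -> r * x = 0) -> r = 0) /\
  (forall phi : R -> R,
      (forall a x y, ideal_gen d x -> ideal_gen d y ->
                     phi (a * x + y) = a * phi x + phi y) ->
      exists r : R, forall x, ideal_gen d x -> phi x = r * x).

Definition ses_sub (P F M : lmodType R) (A : P -> Prop) (B : F -> Prop)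
    (C : M -> Prop) (f : P -> F) (g : F -> M) : Prop :=
  (submodP A /\ submodP B /\ submodP C) /\
  (linear_on A f /\ linear_on B g) /\
  ((forall x, A x -> B (f x)) /\ (forall y, B y -> C (g y))) /\
  (forall x x', A x -> A x' -> f x = f x' -> x = x') /\
  (forall z, C z -> exists y, B y /\ g y = z) /\
  (forall y, B y -> (g y = 0 <-> exists x, A x /\ f x = y)).

(* The exact sequence is w-split, witnessed by J = <d_1,...,d_n> and the
   h_k in Hom_R(C,B) with g h_k = eta_{d_k}. *)
Definition wsplit_with (P F M : lmodType R) (A : P -> Prop) (B : F -> Prop)
    (C : M -> Prop) (f : P -> F) (g : F -> M)
    (n : nat) (d : 'I_n -> R) (h : 'I_n -> M -> F) : Prop :=
  [/\ ses_sub A B C f g, GV_ideal d &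
      forall k, [/\ linear_on C (h k), (forall z, C z -> B (h k z)) &
                    (forall z, C z -> g (h k z) = d k *: z)]].

(* F(H) = (+)_{j in H} F_j, as the set of finite sums of elements of the F_j,
   j in H (for H empty this is 0). *)
Definition FH (I : eqType) (F : lmodType R) (Fi : I -> F -> Prop)
    (H : I -> Prop) (y : F) : Prop :=
  exists (s : seq I) (x : I -> F),
    (forall i, i \in s -> H i /\ Fi i (x i)) /\ y = \sum_(i <- s) x i.

Definition internal_dsum (I : eqType) (F : lmodType R) (Fi : I -> F -> Prop)
  : Prop :=
  (forall i, submodP (Fi i)) /\
  (forall y, FH Fi (fun _ => True) y) /\
  (forall (s : seq I) (x : I -> F), uniq s ->
      (forall i, i \in s -> Fi i (x i)) ->
      \sum_(i <- s) x i = 0 -> forall i, i \in s -> x i = 0).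

Definition MH (I : eqType) (F M : lmodType R) (Fi : I -> F -> Prop)
    (g : F -> M) (H : I -> Prop) (z : M) : Prop :=
  exists y, FH Fi H y /\ g y = z.

Definition PH (I : eqType) (P F M : lmodType R) (Fi : I -> F -> Prop)
    (f : P -> F) (g : F -> M) (H : I -> Prop) (p : P) : Prop :=
  FH Fi H (f p) /\ g (f p) = 0.

End Defs.

(* Main.v *)
Require Import Defs.
From HB Require Import structures.
From mathcomp Require Import all_boot all_order all_algebra.
From Stdlib Require ClassicalEpsilon.
Import GRing.Theory.
Local Open Scope ring_scope.

Lemma part_big (V : nmodType) (I T : eqType) (L : seq (I * T)) (G : I * T -> V) :
  \sum_(p <- L) G p = \sum_(i <- undup (map fst L)) \sum_(p <- L | p.1 == i) G p.
Proof.
under [RHS]eq_bigr => i _ do rewrite big_mkcond.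
rewrite exchange_big /=; apply: eq_big_seq => p pL.
have pin : p.1 \in undup (map fst L) by rewrite mem_undup; apply: map_f.
rewrite (bigD1_seq p.1) ?undup_uniq // eqxx big1 /= ?addr0 // => i.
by rewrite eq_sym => /negbTE ->.
Qed.

Lemma add_sum (V W : nmodType) (S : V -> Prop) (w : V -> W) (T : eqType)
    (l : seq T) (G : T -> V) :
  S 0 -> (forall a b, S a -> S b -> S (a + b)) -> w 0 = 0 ->
  (forall a b, S a -> S b -> w (a + b) = w a + w b) ->
  (forall x, x \in l -> S (G x)) ->
  S (\sum_(x <- l) G x) /\ w (\sum_(x <- l) G x) = \sum_(x <- l) w (G x).
Proof.
move=> S0 SD w0 wD; elim: l => [|a l IH] H; first by rewrite !big_nil.
have [IH1 IH2] : S (\sum_(x <- l) G x) /\ w (\sum_(x <- l) G x) = \sum_(x <- l) w (G x).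
  by apply: IH => x xl; apply: H; rewrite inE xl orbT.
have Sa : S (G a) by apply: H; rewrite inE eqxx.
by rewrite !big_cons; split; [apply: SD | rewrite wD // IH2].
Qed.

Definition okL {R : comPzRingType} {F : lmodType R} {I : eqType} (Fi : I -> F -> Prop)
  (Q : I -> Prop) (L : seq (I * F)) : Prop :=
  forall p, p \in L -> Q p.1 /\ Fi p.1 p.2.

Definition sumL {R : comPzRingType} {F : lmodType R} {I : eqType} (L : seq (I * F)) : F :=
  \sum_(p <- L) p.2.

Lemma subN {R : comPzRingType} {F : lmodType R} (S : F -> Prop) a :
  submodP S -> S a -> S (- a).
Proof. by move=> [_ [_ SZ]] Sa; rewrite -scaleN1r; apply: SZ. Qed.

Lemma zeroW {R : comPzRingType} {F : lmodType R} {I : eqType} {Fi : I -> F -> Prop}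
   {A : zmodType} (w : I -> F -> A) :
  internal_dsum Fi -> (forall i, w i 0 = 0) ->
  (forall i a b, Fi i a -> Fi i b -> w i (a + b) = w i a + w i b) ->
  forall L, okL Fi (fun _ => True) L -> sumL L = 0 ->
  \sum_(p <- L) w p.1 p.2 = 0.
Proof.
move=> [Fsub [_ Find]] w0 wD L okl s0.
pose s := undup (map fst L).
pose c i := \sum_(p <- L | p.1 == i) p.2.
have cF : forall i, Fi i (c i) /\
    w i (c i) = \sum_(p <- L | p.1 == i) w i p.2.
  move=> i; have := @add_sum _ _ (Fi i) (w i) _ [seq p <- L | p.1 == i] (fun p => p.2).
  rewrite !big_filter; apply => //.
  - by case: (Fsub i).
  - by move=> a b; case: (Fsub i) => _ [+ _]; apply.
  - exact: wD.
  - by move=> p; rewrite mem_filter => /andP [/eqP <- /okl []].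
have cs : \sum_(i <- s) c i = 0 by move: s0; rewrite /sumL (part_big _ _ _ L (fun p => p.2)).
have c0 := Find s c (undup_uniq _) (fun i _ => proj1 (cF i)) cs.
rewrite (part_big _ _ _ L (fun p => w p.1 p.2)) big1_seq // => i /andP [_ iS].
transitivity (w i (c i)); last by rewrite c0 // w0.
rewrite (proj2 (cF i)); apply: eq_bigr => p /eqP -> //.
Qed.

Lemma wdW {R : comPzRingType} {F : lmodType R} {I : eqType} {Fi : I -> F -> Prop}
   {A : zmodType} (w : I -> F -> A) :
  internal_dsum Fi -> (forall i, w i 0 = 0) ->
  (forall i a b, Fi i a -> Fi i b -> w i (a + b) = w i a + w i b) ->
  forall L1 L2, okL Fi (fun _ => True) L1 -> okL Fi (fun _ => True) L2 ->
  sumL L1 = sumL L2 ->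
  \sum_(p <- L1) w p.1 p.2 = \sum_(p <- L2) w p.1 p.2.
Proof.
move=> Fd w0 wD L1 L2 ok1 ok2 e.
have wN : forall i a, Fi i a -> w i (- a) = - w i a.
  move=> i a Fa; apply/eqP; rewrite -subr_eq0 opprK addrC -wD ?subrr ?w0 //.
  by apply: subN => //; case: Fd => [Fs _]; apply: Fs.
pose L := L1 ++ map (fun p => (p.1, - p.2)) L2.
have okl : okL Fi (fun _ => True) L.
  move=> p; rewrite mem_cat => /orP [/ok1 //|/mapP [q qL ->]]; split => //=.
  have [_ Fq] := ok2 q qL.
  by apply: subN => //; case: Fd => [Fs _]; apply: Fs.
have sL : sumL L = 0 by rewrite /sumL big_cat big_map /= sumrN -/(sumL L1) -/(sumL L2) e subrr.
have := zeroW w Fd w0 wD L okl sL.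
rewrite big_cat big_map /=.
rewrite [X in _ + X = _](eq_big_seq (fun p => - w p.1 p.2)); last by move=> p pL; have [_ Fp] := ok2 p pL; rewrite wN.
by rewrite sumrN => /eqP; rewrite subr_eq0 => /eqP.
Qed.

Lemma okL_True {R : comPzRingType} {F : lmodType R} {I : eqType} {Fi : I -> F -> Prop}
  Q L : okL Fi Q L -> okL Fi (fun _ => True) L.
Proof. by move=> ok p /ok [_ ?]. Qed.

Lemma FH_L {R : comPzRingType} {F : lmodType R} {I : eqType} (Fi : I -> F -> Prop) Q y :
  (forall i, submodP (Fi i)) ->
  FH Fi Q y <-> exists L, okL Fi Q L /\ y = sumL L.
Proof.
move=> Fs; split.
  move=> [s [x [sx ->]]]; exists (map (fun i => (i, x i)) s); split.
    by move=> p /mapP [i /sx ? ->].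
  by rewrite /sumL big_map.
move=> [L [ok ->]]; exists (undup (map fst L)), (fun i => \sum_(p <- L | p.1 == i) p.2).
split; last by rewrite /sumL (part_big _ _ _ L (fun p => p.2)).
move=> i; rewrite mem_undup => /mapP [q qL ->]; split; first by case: (ok q qL).
have := @add_sum _ _ (Fi q.1) id _ [seq p <- L | p.1 == q.1] (fun p => p.2).
rewrite !big_filter; case => //.
- by case: (Fs q.1).
- by move=> a b; case: (Fs q.1) => _ [+ _]; apply.
- by move=> p; rewrite mem_filter => /andP [/eqP <- pL]; case: (ok p pL).
Qed.

Lemma FH_sub {R : comPzRingType} {F : lmodType R} {I : eqType} (Fi : I -> F -> Prop) Q :
  (forall i, submodP (Fi i)) -> submodP (FH Fi Q).
Proof.
move=> Fs; split; [|split].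
- by apply/(FH_L _ _ _ Fs); exists [::]; split => //; rewrite /sumL big_nil.
- move=> x y /(FH_L _ _ _ Fs) [Lx [okx ->]] /(FH_L _ _ _ Fs) [Ly [oky ->]].
  apply/(FH_L _ _ _ Fs); exists (Lx ++ Ly); split; last by rewrite /sumL big_cat.
  by move=> p; rewrite mem_cat => /orP [/okx|/oky].
- move=> a x /(FH_L _ _ _ Fs) [Lx [okx ->]].
  apply/(FH_L _ _ _ Fs); exists (map (fun q => (q.1, a *: q.2)) Lx); split.
    move=> p /mapP [q qL ->] /=; have [? Fq] := okx q qL; split => //.
    by case: (Fs q.1) => _ [_]; apply.
  by rewrite /sumL big_map scaler_sumr.
Qed.

Lemma lin0 {R : comPzRingType} {V W : lmodType R} (S : V -> Prop) (u : V -> W) :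
  S 0 -> linear_on S u -> u 0 = 0.
Proof.
move=> S0 ul; have e := ul 1 0 0 S0 S0; rewrite !scale1r addr0 in e.
have : u 0 + u 0 - u 0 = u 0 - u 0 by rewrite -e.
by rewrite addrK subrr.
Qed.

Lemma proj_FH {R : comPzRingType} {F : lmodType R} {I : eqType} (Fi : I -> F -> Prop) Q :
  internal_dsum Fi -> (forall i, projective_sub (Fi i)) -> projective_sub (FH Fi Q).
Proof.
move=> Fd Fp.
have Fs : forall i, submodP (Fi i) by move=> i; case: (Fp i).
split; first exact: FH_sub.
move=> A B p u psurj ul.
have [FH0 [FHD FHZ]] := FH_sub Fi Q Fs.
have u0 : u 0 = 0 by apply: lin0 ul.
have uD : forall a b, FH Fi Q a -> FH Fi Q b -> u (a + b) = u a + u b.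
  by move=> a b Ha Hb; have := ul 1 a b Ha Hb; rewrite !scale1r.
have FiFH : forall i a, Q i -> Fi i a -> FH Fi Q a.
  move=> i a Qi Fa; apply/(FH_L _ _ _ Fs); exists [:: (i, a)]; split.
    by move=> q; rewrite inE => /eqP ->.
  by rewrite /sumL big_seq1.
pose Pv i (v : F -> A) := v 0 = 0 /\
  (forall a b, Fi i a -> Fi i b -> v (a + b) = v a + v b) /\
  (Q i -> linear_on (Fi i) v /\ forall x, Fi i x -> p (v x) = u x).
have exv : forall i, exists v, Pv i v.
  move=> i; case: (Classical_Prop.classic (Q i)) => Qi; last first.
    by exists (fun _ => 0); split; [|split] => // *; rewrite addr0.
  have [S0 _] := Fs i.
  have [v [vl vp]] := (proj2 (Fp i)) A B p u psurj
     (fun a x y Hx Hy => ul a x y (FiFH _ _ Qi Hx) (FiFH _ _ Qi Hy)).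
  exists v; split; first by apply: lin0 vl.
  by split => // a b Ha Hb; have := vl 1 a b Ha Hb; rewrite !scale1r.
pose vf i := ClassicalEpsilon.epsilon (inhabits (fun _ : F => (0 : A))) (Pv i).
have vfP : forall i, Pv i (vf i) by move=> i; apply: ClassicalEpsilon.epsilon_spec.
have vf0 : forall i, vf i 0 = 0 by move=> i; case: (vfP i).
have vfD : forall i a b, Fi i a -> Fi i b -> vf i (a + b) = vf i a + vf i b.
  by move=> i; case: (vfP i) => _ [].
have vfZ : forall i a c, Q i -> Fi i c -> vf i (a *: c) = a *: vf i c.
  move=> i a c Qi Fc; case: (vfP i) => _ [_ /(_ Qi) [vl _]].
  have [S0 _] := Fs i.
  by rewrite -(addr0 (a *: c)) vl // vf0 addr0.
pose PL y := fun L => okL Fi Q L /\ y = sumL L.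
pose V y := \sum_(q <- ClassicalEpsilon.epsilon (inhabits [::]) (PL y)) vf q.1 q.2.
have VL : forall y L, okL Fi Q L -> y = sumL L -> V y = \sum_(q <- L) vf q.1 q.2.
  move=> y L ok e.
  have [ok' e'] := ClassicalEpsilon.epsilon_spec (inhabits [::]) (PL y) (ex_intro _ L (conj ok e)).
  apply: (wdW vf Fd vf0 vfD); [exact: okL_True ok'|exact: okL_True ok|by rewrite -e' -e].
exists V; split.
  move=> a x y /(FH_L _ _ _ Fs) [Lx [okx ex]] /(FH_L _ _ _ Fs) [Ly [oky ey]].
  pose L := map (fun q => (q.1, a *: q.2)) Lx ++ Ly.
  have okl : okL Fi Q L.
    move=> q; rewrite mem_cat => /orP [/mapP [r rL ->] /=|/oky //].
    have [? Fr] := okx r rL; split => //.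
    by case: (Fs r.1) => _ [_]; apply.
  rewrite (VL _ L okl); last by rewrite /sumL big_cat big_map -scaler_sumr ex ey.
  rewrite (VL _ _ okx ex) (VL _ _ oky ey) /L big_cat big_map /= scaler_sumr.
  congr (_ + _); apply: eq_big_seq => q qL; have [Qq Fq] := okx q qL.
  by rewrite vfZ.
move=> y /(FH_L _ _ _ Fs) [Ly [oky ey]].
rewrite (VL _ _ oky ey) raddf_sum.
rewrite (eq_big_seq (fun q => u q.2)); last first.
  move=> q qL /=; have [Qq Fq] := oky q qL; by case: (vfP q.1) => _ [_ /(_ Qq) [_ ->]].
have := @add_sum _ _ (FH Fi Q) u _ Ly (fun q => q.2) FH0 FHD u0 uD.
rewrite ey /sumL; case => // q qL; have [Qq Fq] := oky q qL; exact: FiFH Qq Fq.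
Qed.

Theorem lemma3p1 (R : comPzRingType) (P F M : lmodType R)
    (f : {linear P -> F}) (g : {linear F -> M})
    (n : nat) (d : 'I_n -> R) (h : 'I_n -> {linear M -> F})
    (I : eqType) (Fi : I -> F -> Prop)
    (S1 : (I -> Prop) -> Prop) :
  wsplit_with (fun _ => True) (fun _ => True) (fun _ => True)
    f g d (fun k => h k) ->
  internal_dsum Fi ->
  (forall i, projective_sub (Fi i)) ->
  (exists Hs, S1 Hs) ->
  (forall A B, S1 A -> S1 B -> (forall i, A i -> B i) \/ (forall i, B i -> A i)) ->
  (forall Hs, S1 Hs -> forall k z, MH Fi g Hs z -> FH Fi Hs (h k z)) ->
  let H := fun i => exists Hs, S1 Hs /\ Hs i in
  ((forall y, (exists Hs, S1 Hs /\ FH Fi Hs y) <-> FH Fi H y) /\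
   projective_sub (FH Fi H) /\
   (forall p, (exists Hs, S1 Hs /\ PH Fi f g Hs p) <-> PH Fi f g H p) /\
   (forall z, (exists Hs, S1 Hs /\ MH Fi g Hs z) <-> MH Fi g H z)) /\
  ((forall k z, MH Fi g H z -> FH Fi H (h k z)) /\
   wsplit_with (PH Fi f g H) (FH Fi H) (MH Fi g H) f g d (fun k => h k)).
Proof.
move=> [ses GV hk] Fd Fp [H0 S0] chain hS H.
have Fs : forall i, submodP (Fi i) by move=> i; case: (Fp i).
have mono : forall (A B : I -> Prop) y, (forall i, A i -> B i) -> FH Fi A y -> FH Fi B y.
  move=> A B y AB [s [x [sx ->]]]; exists s, x; split => // i /sx [/AB].
  by split.
have cover : forall s : seq I, (forall i, i \in s -> H i) ->
    exists Hs, S1 Hs /\ forall i, i \in s -> Hs i.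
  elim => [|a s IH] sH; first by exists H0.
  have [Hs [S1s Hss]] : exists Hs, S1 Hs /\ forall i, i \in s -> Hs i.
    by apply: IH => i iS; apply: sH; rewrite inE iS orbT.
  have [Ha [S1a Haa]] := sH a (mem_head _ _).
  case: (chain _ _ S1s S1a) => sub.
    by exists Ha; split => // i; rewrite inE => /orP [/eqP -> //|/Hss /sub].
  by exists Hs; split => // i; rewrite inE => /orP [/eqP -> |/Hss //]; apply: sub.
have FHiff : forall y, (exists Hs, S1 Hs /\ FH Fi Hs y) <-> FH Fi H y.
  move=> y; split.
    by move=> [Hs [S1s Fy]]; apply: mono Fy => i Hi; exists Hs.
  move=> [s [x [sx ->]]].
  have [Hs [S1s Hss]] := cover s (fun i iS => proj1 (sx i iS)).
  exists Hs; split => //; exists s, x; split => // i iS; split; [exact: Hss|exact: (proj2 (sx i iS))].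
have MHiff : forall z, (exists Hs, S1 Hs /\ MH Fi g Hs z) <-> MH Fi g H z.
  move=> z; split.
    by move=> [Hs [S1s [y [Fy <-]]]]; exists y; split => //; apply/FHiff; exists Hs.
  move=> [y [/FHiff [Hs [S1s Fy]] <-]]; exists Hs; split => //; by exists y.
have hH : forall k z, MH Fi g H z -> FH Fi H (h k z).
  move=> k z /MHiff [Hs [S1s Mz]]; apply/FHiff; exists Hs; split => //.
  exact: hS.
have [FH0 [FHD FHZ]] := FH_sub Fi H Fs.
split.
  split; first exact: FHiff.
  split; first exact: proj_FH.
  split => // p; split.
    by move=> [Hs [S1s [Fp' gp]]]; split => //; apply/FHiff; exists Hs.
  by move=> [/FHiff [Hs [S1s Fp']] gp]; exists Hs.
split => //.
case: ses => _ [_ [_ [finj [gsurj gex]]]].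
split => //; last first.
  move=> k; case: (hk k) => _ _ hd; split.
  - by move=> a x y _ _; rewrite linearP.
  - exact: hH.
  - by move=> z _; apply: hd.
split.
  split; [|split].
  split; [|split].
  - by rewrite /PH raddf0 raddf0.
  - by move=> x y [Fx gx] [Fy gy]; rewrite /PH !linearD; split; [apply: FHD|]; last by rewrite gx gy addr0.
  - move=> a x [Fx gx]; rewrite /PH linearZ; split; first by apply: FHZ.
    by rewrite linearZ /= gx; apply: scaler0.
  - exact: FH_sub.
  split; [|split].
  - by exists 0; split => //; rewrite raddf0.
  - by move=> x y [x' [Fx <-]] [y' [Fy <-]]; exists (x' + y'); split; [apply: FHD|rewrite raddfD].
  - by move=> a x [x' [Fx <-]]; exists (a *: x'); split; [apply: FHZ|rewrite linearZ].
split.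
  by split => a x y _ _; rewrite linearP.
split.
  by split => [x [] //|y Fy]; exists y.
split.
  by move=> x x' _ _; apply: finj.
split.
  by move=> z [y [Fy <-]]; exists y.
move=> y Fy; split.
  move=> gy; have [x [_ fx]] := (proj1 (gex y Logic.I)) gy.
  by exists x; rewrite /PH fx.
by move=> [x [[_ gx] <-]].
Qed.
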